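(* Let $n\ge3$. For a non-degenerate $n$-gon $Z=(z_1,\dots,z_n)$ put $a_i=[z_i-z_{i-1},z_{i+1}-z_i]$, and for $k=1,\dots,n$ let $W_k=(w_{1k},\dots,w_{nk})$ be the tangent vector at $Z$ with $w_{ik}=0$ for $i\notin\{k,k+1\}$, $w_{k,k}=a_{k+1}(z_k-z_{k-1})$ and $w_{k+1,k}=a_k(z_{k+2}-z_{k+1})$. Then at every $Z\in U_n$ the vectors $W_1,\dots,W_n$ are linearly independent and span the fiber $F(Z)$ of the dual Birkhoff distribution.
   Context: $[\cdot,\cdot]$ is the determinant of two plane vectors; indices are cyclic. $G_n$ is the set of $n$-gons in $\mathbb R^2$ with $z_i\ne z_{i+1}$ for all $i$; $U_n\subset G_n$ is the open set of non-degenerate $n$-gons (no three consecutive vertices collinear). The dual Birkhoff distribution $\mathcal F$ on $G_n$: a tangent vector $W=(w_1,\dots,w_n)$ (velocities of the vertices) lies in $\mathcal F$ iff for each $i$ the induced motion of the line $z_iz_{i+1}$ is an infinitesimal rotation about the midpoint of $z_iz_{i+1}$; equivalently $[w_i+w_{i+1},z_{i+1}-z_i]=0$ for all $i$. $F(Z)$ denotes the fiber of $\mathcal F$ at $Z$. *)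

(* Defs.v *)
(* Plane vectors are row vectors 'rV[R]_2; an n-gon is a map
   'I_n -> 'rV[R]_2 (vertex i = z_{i+1} in the paper's 1-based numbering);
   indices are cyclic via ordS / ord_pred. *)
From HB Require Import structures.
From mathcomp Require Import all_boot all_order all_algebra.
Set Implicit Arguments. Unset Strict Implicit. Unset Printing Implicit Defensive.
Import Order.TTheory GRing.Theory Num.Theory.
Local Open Scope ring_scope.

Section Defs.
Variables (R : realFieldType) (n : nat).

Definition det2 (u v : 'rV[R]_2) : R := u 0 0 * v 0 1 - u 0 1 * v 0 0.

Definition nxt (i : 'I_n) : 'I_n := ordS i.
Definition prv (i : 'I_n) : 'I_n := ord_pred i.

Definition collinear (a b c : 'rV[R]_2) : Prop := det2 (b - a) (c - a) = 0.

Definition in_G (Z : 'I_n -> 'rV[R]_2) : Prop := forall i, Z i <> Z (nxt i).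

Definition in_U (Z : 'I_n -> 'rV[R]_2) : Prop :=
  in_G Z /\ forall i, ~ collinear (Z (prv i)) (Z i) (Z (nxt i)).

Definition in_F (Z W : 'I_n -> 'rV[R]_2) : Prop :=
  forall i, det2 (W i + W (nxt i)) (Z (nxt i) - Z i) = 0.

Definition acoef (Z : 'I_n -> 'rV[R]_2) (i : 'I_n) : R :=
  det2 (Z i - Z (prv i)) (Z (nxt i) - Z i).

Definition Wvec (Z : 'I_n -> 'rV[R]_2) (k : 'I_n) : 'I_n -> 'rV[R]_2 :=
  fun i => if i == k then acoef Z (nxt k) *: (Z k - Z (prv k))
           else if i == nxt k then acoef Z k *: (Z (nxt (nxt k)) - Z (nxt k))
           else 0.

End Defs.

(* Main.v *)
Require Import Defs.
From HB Require Import structures.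
From mathcomp Require Import all_boot all_order all_algebra.
From mathcomp Require Import zify ring lra.
Import Order.TTheory GRing.Theory Num.Theory.
Local Open Scope ring_scope.
Lemma nxt_neq n (hn : (3 <= n)%N) (i : 'I_n) : nxt i != i.
Proof.
apply/eqP => /(congr1 val) /=; case: i => i hi /=.
have [h|h] := ltnP i.+1 n.
  by rewrite modn_small //; lia.
have -> : i.+1 = n by lia.
rewrite modnn; lia.
Qed.

Lemma nxt2_neq n (hn : (3 <= n)%N) (i : 'I_n) : nxt (nxt i) != i.
Proof.
apply/eqP => /(congr1 val) /=; case: i => i hi /=.
have [h|h] := ltnP i.+1 n.
  rewrite (modn_small h).
  have [h2|h2] := ltnP i.+2 n.
    by rewrite modn_small //; lia.
  have -> : i.+2 = n by lia.
  rewrite modnn; lia.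
have -> : i.+1 = n by lia.
rewrite modnn modn_small; lia.
Qed.
Lemma nxt_prv n (i : 'I_n) : nxt (prv i) = i.
Proof. exact: ord_predK. Qed.
Lemma prv_nxt n (i : 'I_n) : prv (nxt i) = i.
Proof. exact: ordSK. Qed.

Lemma sumW (R : realFieldType) n (hn : (3 <= n)%N) (Z : 'I_n -> 'rV[R]_2)
  (c : 'I_n -> R) (i : 'I_n) :
  \sum_(k < n) c k *: Wvec Z k i =
  c i *: (acoef Z (nxt i) *: (Z i - Z (prv i))) +
  c (prv i) *: (acoef Z (prv i) *: (Z (nxt i) - Z i)).
Proof.
have hpi : prv i != i.
  apply/eqP => h; move: (@nxt_neq _ hn i).
  by rewrite -{1}h nxt_prv eqxx.
rewrite (bigD1 i) //= (bigD1 (prv i)) //= big1 ?addr0.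
  rewrite /Wvec eqxx eq_sym (negbTE hpi) nxt_prv eqxx.
  by [].
move=> k /andP [hk1 hk2]; rewrite /Wvec eq_sym (negbTE hk1).
case: ifP => [/eqP h|_]; last by rewrite scaler0.
by move: hk2; rewrite h prv_nxt eqxx.
Qed.

Lemma rv2P (R : realFieldType) (u v : 'rV[R]_2) : u 0 0 = v 0 0 -> u 0 1 = v 0 1 -> u = v.
Proof.
move=> h0 h1; apply/rowP => j; case: j => [[|[|//]]] hj.
  by rewrite (_ : Ordinal hj = 0) //; apply: val_inj.
by rewrite (_ : Ordinal hj = 1) //; apply: val_inj.
Qed.

Lemma acoef_neq0 (R : realFieldType) n (Z : 'I_n -> 'rV[R]_2) :
  in_U Z -> forall i, acoef Z i != 0.
Proof.
move=> [_ hU] i; apply/eqP => h; apply: (hU i).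
move: h; rewrite /collinear /acoef /det2 !mxE => h.
by rewrite -h; ring.
Qed.

Lemma indep2 (R : realFieldType) (u v : 'rV[R]_2) x y :
  det2 u v != 0 -> x *: u + y *: v = 0 -> x = 0.
Proof.
move=> huv h.
have h0 := congr1 (fun w : 'rV[R]_2 => w 0 0) h.
have h1 := congr1 (fun w : 'rV[R]_2 => w 0 1) h.
move: h0 h1 => /=; rewrite !mxE => h0 h1.
have : x * det2 u v = 0.
  rewrite /det2.
  have -> : x * (u 0 0 * v 0 1 - u 0 1 * v 0 0) =
    (x * u 0 0 + y * v 0 0) * v 0 1 - (x * u 0 1 + y * v 0 1) * v 0 0 by ring.
  by rewrite h0 h1; ring.
by move/eqP; rewrite mulf_eq0 (negbTE huv) orbF => /eqP.
Qed.

Lemma key2 (R : realFieldType) (u v V V' : 'rV[R]_2) (a1 a2 : R) :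
  det2 u v != 0 -> a1 != 0 -> a2 != 0 -> det2 (V' + V) u = 0 ->
  V = (det2 V v / (det2 u v * a1)) *: (a1 *: u) +
      (det2 V' u / (a2 * det2 u v)) *: (a2 *: v).
Proof.
move=> huv h1 h2 hF.
have hQ : det2 V' u = - det2 V u.
  apply/eqP; rewrite -subr_eq0 opprK; apply/eqP; rewrite -hF /det2 !mxE; ring.
rewrite hQ; move: huv; rewrite /det2 => huv.
apply: rv2P; rewrite !mxE; field; by rewrite ?huv ?h1 ?h2.
Qed.

Lemma close2 (R : realFieldType) (u v w : 'rV[R]_2) c y y' z z' :
  det2 (c *: (det2 v w *: u) + y *: (y' *: v) + (z *: (z' *: v) + c *: (det2 u v *: w))) v = 0.
Proof. rewrite /det2 !mxE; ring. Qed.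
Theorem lemma2p4 (R : realFieldType) (n : nat) (hn : (3 <= n)%N)
    (Z : 'I_n -> 'rV[R]_2) :
  in_U Z ->
  (* linear independence of W_1, ..., W_n *)
  (forall c : 'I_n -> R,
      (forall i, \sum_(k < n) c k *: Wvec Z k i = 0) -> forall k, c k = 0) /\
  (* they span exactly the fiber F(Z) *)
  (forall V : 'I_n -> 'rV[R]_2,
      in_F Z V <-> exists c : 'I_n -> R, forall i, V i = \sum_(k < n) c k *: Wvec Z k i).
Proof.
move=> hU; have ha := @acoef_neq0 _ _ _ hU.
split.
  move=> c H k; have := H k; rewrite (@sumW _ _ hn Z) !scalerA => /(@indep2 _ _ _ _ _ (ha k)).
  by move/eqP; rewrite mulf_eq0 (negbTE (ha _)) orbF => /eqP.
move=> V; split.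
  move=> HF.
  exists (fun k => det2 (V k) (Z (nxt k) - Z k) / (acoef Z k * acoef Z (nxt k))).
  move=> i; rewrite (@sumW _ _ hn Z) nxt_prv.
  apply: (@key2 R (Z i - Z (prv i)) (Z (nxt i) - Z i) (V i) (V (prv i))).
  - exact: ha.
  - exact: ha.
  - exact: ha.
  - by have := HF (prv i); rewrite nxt_prv.
move=> [c HV] i; rewrite !HV !(@sumW _ _ hn Z) prv_nxt /acoef prv_nxt.
exact: (@close2 R (Z i - Z (prv i)) (Z (nxt i) - Z i) (Z (nxt (nxt i)) - Z (nxt i))).
Qed.
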